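(* Let $(V,L,\varphi,E)$ be a valuation system. Let $K$ be a sublattice of $V$ with $L$ a sublattice of $K$, and let $\psi:K\to E$ be a valuation which extends $\varphi$. Suppose $\psi$ is $\Pi$-extendible. Then $\varphi$ is $\Pi$-extendible and $\Pi\psi$ extends $\Pi\varphi$.
   Context: A valuation system $(V,L,\varphi,E)$ consists of: (i) a lattice $V$ which is $\sigma$-distributive, i.e. for every $a\in V$ and every sequence $(b_n)$ in $V$ whose infimum exists, $\bigwedge_n(a\vee b_n)$ exists and equals $a\vee\bigwedge_n b_n$, and dually for suprema; (ii) a sublattice $L$ of $V$; (iii) a partially ordered abelian group $E$ which is R-complete: whenever $x_1\ge x_2\ge\cdots$ and $y_1\ge y_2\ge\cdots$ in $E$ are such that $\bigwedge_n(x_n+y_n)$ exists, then $\bigwedge_n x_n$ and $\bigwedge_n y_n$ exist, and dually for increasing sequences and suprema; (iv) a valuation $\varphi:L\to E$, i.e. an order-preserving map with $\varphi(a\wedge b)+\varphi(a\vee b)=\varphi(a)+\varphi(b)$. A map $\psi:C\to E$ extends $\varphi:L\to E$ if $L\subseteq C$ and $\psi|_L=\varphi$. A decreasing sequence $a_1\ge a_2\ge\cdots$ in $L$ is $\varphi$-convergent if $\bigwedge_n a_n$ exists in $V$ and $\bigwedge_n\varphi(a_n)$ exists in $E$. Let $\Pi L:=\{\bigwedge_n a_n: (a_n)\text{ a }\varphi\text{-convergent decreasing sequence in }L\}$ (a sublattice of $V$). $\varphi$ is $\Pi$-extendible if there is a valuation $\Pi\varphi:\Pi L\to E$ with $\Pi\varphi(\bigwedge_n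 a_n)=\bigwedge_n\varphi(a_n)$ for every $\varphi$-convergent decreasing sequence $(a_n)$ in $L$; the same notions apply to $\psi$ on $K$. *)

(* Defs.v *)
From HB Require Import structures.
From mathcomp Require Import all_boot all_order all_algebra.
Set Implicit Arguments. Unset Strict Implicit. Unset Printing Implicit Defensive.
Import Order.TTheory GRing.Theory Num.Theory.
Local Open Scope order_scope.
Local Open Scope ring_scope.

Definition is_inf {d : Order.disp_t} {T : porderType d} (s : nat -> T) (x : T) :=
  (forall n, (x <= s n)%O) /\ (forall z, (forall n, (z <= s n)%O) -> (z <= x)%O).
Definition is_sup {d : Order.disp_t} {T : porderType d} (s : nat -> T) (x : T) :=
  (forall n, (s n <= x)%O) /\ (forall z, (forall n, (s n <= z)%O) -> (x <= z)%O).
Definition has_inf {d : Order.disp_t} {T : porderType d} (s : nat -> T) :=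
  exists x, is_inf s x.
Definition has_sup {d : Order.disp_t} {T : porderType d} (s : nat -> T) :=
  exists x, is_sup s x.

Definition sigma_distributive {d : Order.disp_t} (V : latticeType d) :=
  (forall (a : V) (b : nat -> V) (x : V), is_inf b x ->
     is_inf (fun n => (a `|` b n)%O) (a `|` x)%O) /\
  (forall (a : V) (b : nat -> V) (x : V), is_sup b x ->
     is_sup (fun n => (a `&` b n)%O) (a `&` x)%O).

Definition pogroup (E : porderZmodType) :=
  forall x y z : E, x <= y -> x + z <= y + z.

Definition R_complete (E : porderZmodType) :=
  (forall x y : nat -> E,
     (forall n, x n.+1 <= x n) -> (forall n, y n.+1 <= y n) ->
     has_inf (fun n => x n + y n) -> has_inf x /\ has_inf y) /\
  (forall x y : nat -> E,
     (forall n, x n <= x n.+1) -> (forall n, y n <= y n.+1) ->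
     has_sup (fun n => x n + y n) -> has_sup x /\ has_sup y).

Definition sublattice {d : Order.disp_t} {V : latticeType d} (L : V -> Prop) :=
  forall a b, L a -> L b -> L (a `&` b)%O /\ L (a `|` b)%O.

(* a valuation on (the sublattice) L; phi is a total function only its
   values on L matter *)
Definition valuation {d : Order.disp_t} {V : latticeType d}
    {E : porderZmodType} (L : V -> Prop) (phi : V -> E) :=
  (forall a b, L a -> L b -> (a <= b)%O -> phi a <= phi b) /\
  (forall a b, L a -> L b -> phi (a `&` b)%O + phi (a `|` b)%O = phi a + phi b).

Definition valuation_system {d : Order.disp_t} (V : latticeType d)
    (L : V -> Prop) (E : porderZmodType) (phi : V -> E) :=
  [/\ sigma_distributive V, sublattice L, pogroup E, R_complete E & valuation L phi].

Definition extends {d : Order.disp_t} {V : latticeType d}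
    {E : porderZmodType} (K : V -> Prop) (psi : V -> E)
    (L : V -> Prop) (phi : V -> E) :=
  (forall a, L a -> K a) /\ (forall a, L a -> psi a = phi a).

Definition decreasing_in {d : Order.disp_t} {V : latticeType d}
    (L : V -> Prop) (a : nat -> V) :=
  (forall n, L (a n)) /\ (forall n, (a n.+1 <= a n)%O).

Definition phi_convergent {d : Order.disp_t} {V : latticeType d}
    {E : porderZmodType} (L : V -> Prop) (phi : V -> E) (a : nat -> V) :=
  decreasing_in L a /\ has_inf a /\ has_inf (fun n => phi (a n)).

Definition PiL {d : Order.disp_t} {V : latticeType d}
    {E : porderZmodType} (L : V -> Prop) (phi : V -> E) (x : V) :=
  exists a, phi_convergent L phi a /\ is_inf a x.

Definition Pi_extension {d : Order.disp_t} {V : latticeType d}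
    {E : porderZmodType} (L : V -> Prop) (phi : V -> E) (Piphi : V -> E) :=
  valuation (PiL L phi) Piphi /\
  (forall a x y, phi_convergent L phi a -> is_inf a x ->
     is_inf (fun n => phi (a n)) y -> Piphi x = y).

Definition Pi_extendible {d : Order.disp_t} {V : latticeType d}
    {E : porderZmodType} (L : V -> Prop) (phi : V -> E) :=
  exists Piphi, Pi_extension L phi Piphi.

Arguments valuation_system {d} V L E phi.

(* Main.v *)
Require Import Defs.
From HB Require Import structures.
From mathcomp Require Import all_boot all_order all_algebra.

Lemma is_inf_ext (d : Order.disp_t) (T : porderType d) (s t : nat -> T) x :
  (forall n, s n = t n) -> is_inf s x -> is_inf t x.
Proof.
move=> e [h1 h2]; split=> [n|z hz]; first by rewrite -e.
by apply: h2 => n; rewrite e.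
Qed.

Lemma conv_transfer (d : Order.disp_t) (V : latticeType d) (E : porderZmodType)
    (L K : V -> Prop) (phi psi : V -> E) a :
  extends K psi L phi -> phi_convergent L phi a -> phi_convergent K psi a.
Proof.
move=> [hLK he] [[hL hdec] [hi [y hy]]].
split; first by split=> // n; apply: hLK.
split=> //; exists y; apply: is_inf_ext hy => n; by rewrite he.
Qed.

Lemma PiL_sub (d : Order.disp_t) (V : latticeType d) (E : porderZmodType)
    (L K : V -> Prop) (phi psi : V -> E) x :
  extends K psi L phi -> PiL L phi x -> PiL K psi x.
Proof.
move=> hext [a [ha hx]]; exists a; split=> //; exact: (@conv_transfer d V E L K phi psi a hext ha).
Qed.

Theorem lemma5p6 (d : Order.disp_t) (V : latticeType d) (E : porderZmodType)
    (L K : V -> Prop) (phi psi : V -> E) :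
  valuation_system V L E phi ->
  sublattice K -> (forall a, L a -> K a) ->
  valuation K psi -> extends K psi L phi ->
  forall Pipsi : V -> E, Pi_extension K psi Pipsi ->
  Pi_extendible L phi /\
  (forall Piphi : V -> E, Pi_extension L phi Piphi ->
     extends (PiL K psi) Pipsi (PiL L phi) Piphi).
Proof.
move=> _ _ _ _ hext Pipsi [[hmon hmod] hval].
have hsub := fun x => @PiL_sub d V E L K phi psi x hext.
have key : forall a x y, phi_convergent L phi a -> is_inf a x ->
    is_inf (fun n => phi (a n)) y -> Pipsi x = y.
  move=> a x y ha hx hy; apply: (hval a) => //; first exact: (@conv_transfer d V E L K phi psi a hext ha).
  by apply: is_inf_ext hy => n; case: hext => _ ->; last by case: ha => [[]].
split.
  exists Pipsi; split=> //; split.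
    by move=> a b ha hb; apply: hmon; apply: hsub.
  by move=> a b ha hb; apply: hmod; apply: hsub.
move=> Piphi [_ hphi]; split; first exact: hsub.
move=> x [a [ha hx]].
have := ha; case=> _ [_ [y hy]].
by rewrite (key a x y) // (hphi a x y).
Qed.
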